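(* For all $n\in\mathbb N$, \[\big((d_{T^{(n)}}(i),h_{T^{(n)}}(i)),\ i\in[n]\big)\stackrel{\mathcal L}{=}\big((d_{T_n}(\sigma(i)),h_{T_n}(\sigma(i))),\ i\in[n]\big),\] where $\sigma$ is a uniformly random permutation of $[n]$ independent of $T_n$. Consequently, jointly over all $i\in\mathbb Z$, $j\in\mathbb N$, the counts $|\{v\in[n]:d_{T_n}(v)=i,h_{T_n}(v)=j\}|$ and $|\{v\in[n]:d_{T^{(n)}}(v)=i,h_{T^{(n)}}(v)=j\}|$ have the same joint distribution.
   Context: Trees are rooted, edges directed towards the root; $d_t(v)$ is the number of children of $v$ in $t$ and $h_t(v)$ its distance to the root. $T_n$ is a random recursive tree: $T_1$ is a single root $1$, and $T_{m+1}$ is obtained from $T_m$ by attaching vertex $m+1$ to a uniformly random vertex of $[m]$, independently. Kingman's $n$-coalescent $(F_n,\dots,F_1)$ is the random sequence of forests on $[n]$ where $F_n$ has no edges and, for $2\le i\le n$, listing the trees of $F_i$ as $T^{(i)}_1,\dots,T^{(i)}_i$ in increasing order of smallest label, one chooses $\{a_i,b_i\}$ uniformly among 2-subsets of $[i]$ and an independent fair bit $\xi_i$ (independent over $i$), and obtains $F_{i-1}$ by adding an edge between the roots of $T^{(i)}_{a_i},T^{(i)}_{b_i}$ directed towards the root of $T^{(i)}_{\min(a_i,b_i)}$ if $\xi_i=1$ and towards the other root otherwise (the head becomes the root of the merged tree). $T^{(n)}$ is the unique tree of $F_1$, with its original labels in $[n]$. *)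

(* Defs.v *)
From HB Require Import structures.
From mathcomp Require Import all_boot all_order all_algebra all_fingroup.
From mathcomp Require Import ssrint rat.
Set Implicit Arguments. Unset Strict Implicit. Unset Printing Implicit Defensive.
Import GRing.Theory Num.Theory.

(* Conventions: the vertex/label set [n] = {1,...,n} is represented by 'I_n,
   label i+1 <-> ordinal i.  A rooted forest on 'I_n is a parent map
   par : 'I_n -> option 'I_n (None = root; edges point towards the root). *)

Section Forest.
Variable n : nat.
Implicit Types (par : 'I_n -> option 'I_n) (v : 'I_n).

Definition dchild par v : nat := #|[set u | par u == Some v]|.

Definition anc par (k : nat) v : option 'I_n := iter k (fun o => obind par o) (Some v).

(* height h(v) = distance to the root = number of k>=1 with a k-th ancestor *)
Definition depth par v : nat := \sum_(k < n) (anc par k.+1 v != None).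

Definition root_of par v : 'I_n :=
  iter n (fun x => if par x is Some y then y else x) v.

Definition profile par : {ffun 'I_n -> nat * nat} :=
  [ffun v => (dchild par v, depth par v)].

Definition count_dh par (i : int) (j : nat) : nat :=
  #|[set v | (Posz (dchild par v) == i) && (depth par v == j)]|.
End Forest.

Definition prob (T : finType) (A : {set T}) (E : pred T) : rat :=
  (#|[set x in A | E x]|%:R / #|A|%:R)%R.

(* outcome f: vertex m (label m+1), m >= 1, attaches to f m < m; f 0 = 0 dummy *)
Definition rrt_space n : {set {ffun 'I_n -> 'I_n}} :=
  [set f : {ffun 'I_n -> 'I_n} |
     [forall m : 'I_n, if val m == 0 then f m == m else (f m < m)%N]].

Definition rrt_par n (f : {ffun 'I_n -> 'I_n}) : 'I_n -> option 'I_n :=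
  fun v => if val v == 0 then None else Some (f v).

(* tree representatives = minimal labels of the trees, in increasing order *)
Definition reps n (par : 'I_n -> option 'I_n) : seq 'I_n :=
  [seq v : 'I_n <- enum 'I_n |
     [forall u : 'I_n, (u < v)%N ==> (root_of par u != root_of par v)]].

(* merge trees number a < b (0-indexed, sorted by smallest label);
   xi = true: head is the root of tree a (= tree min(a,b)) *)
Definition kmerge n (par : 'I_n -> option 'I_n) (a b : 'I_n) (xi : bool)
  : 'I_n -> option 'I_n :=
  let ra := root_of par (nth a (reps par) a) in
  let rb := root_of par (nth a (reps par) b) in
  if xi then fun v => if v == rb then Some ra else par v
        else fun v => if v == ra then Some rb else par v.

(* outcome w: entry k (1 <= k <= n-1) is the choice made when there are
   i = k+1 trees: a pair a < b <= k (i.e. a 2-subset of [i]) and the bit xi.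
   Entry 0 is an unused dummy fixed to (0,0,false). *)
Definition king_space n : {set {ffun 'I_n -> 'I_n * 'I_n * bool}} :=
  [set w : {ffun 'I_n -> 'I_n * 'I_n * bool} |
     [forall k : 'I_n,
        if val k == 0 then [&& (w k).1.1 == k, (w k).1.2 == k & ~~ (w k).2]
        else ((w k).1.1 < (w k).1.2)%N && ((w k).1.2 <= k)%N]].

(* final tree T^(n): steps i = n, n-1, ..., 2, i.e. k = n-1, ..., 1 *)
Definition kingman n (w : {ffun 'I_n -> 'I_n * 'I_n * bool}) : 'I_n -> option 'I_n :=
  foldl (fun par (k : 'I_n) =>
           if val k == 0 then par else kmerge par (w k).1.1 (w k).1.2 (w k).2)
        (fun _ => None) (rev (enum 'I_n)).

(* Main.v *)
Require Import Defs.
From HB Require Import structures.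
From mathcomp Require Import all_boot all_order all_algebra all_fingroup.
From mathcomp Require Import ssrint rat.
From mathcomp Require Import zify.
From Stdlib Require Import FunctionalExtensionality.
Set Implicit Arguments. Unset Strict Implicit. Unset Printing Implicit Defensive.

Section Relabel.
Variable n : nat.
Variable s : {perm 'I_n}.
Variable par : 'I_n -> option 'I_n.
Definition relab (v : 'I_n) := omap s (par ((s^-1)%g v)).

Lemma relab_anc k v : anc relab k v = omap s (anc par k ((s^-1)%g v)).
Proof.
elim: k => [|k IH]; first by rewrite /anc /= permKV.
have -> : anc relab k.+1 v = obind relab (anc relab k v) by [].
have -> : anc par k.+1 (s^-1 v)%g = obind par (anc par k (s^-1 v)%g) by [].
rewrite IH; case: (anc par k _) => //= x.
by rewrite /relab permK.
Qed.

Lemma relab_depth v : depth relab v = depth par ((s^-1)%g v).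
Proof.
rewrite /depth; apply: eq_bigr => k _; rewrite relab_anc.
by case: (anc par _ _).
Qed.

Lemma relab_dchild v : dchild relab v = dchild par ((s^-1)%g v).
Proof.
rewrite /dchild -(card_preimset _ (@perm_inj _ s)).
apply: eq_card => u; rewrite !inE /relab permK.
case: (par _) => [x|] //=.
apply/eqP/eqP => [[<-]|[->]]; by rewrite ?permK ?permKV.
Qed.

Lemma relab_profile v : profile relab v = profile par ((s^-1)%g v).
Proof. by rewrite !ffunE relab_dchild relab_depth. Qed.

Lemma relab_count i j : count_dh relab i j = count_dh par i j.
Proof.
rewrite /count_dh -(card_preimset _ (@perm_inj _ s)).
by apply: eq_card => u; rewrite !inE relab_dchild relab_depth permK.
Qed.
End Relabel.

Section Reps.
Variable n : nat.
Implicit Types (par : 'I_n -> option 'I_n) (v : 'I_n).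

Lemma reps_uniq par : uniq (reps par).
Proof. by rewrite /reps filter_uniq // enum_uniq. Qed.

Lemma reps_inj par : {in reps par &, injective (root_of par)}.
Proof.
move=> u v; rewrite /reps !mem_filter => /andP[/forallP Hu _] /andP[/forallP Hv _] E.
case: (ltngtP u v) => [uv|vu|/val_inj //].
- by move: (Hv u); rewrite uv /= E eqxx.
- by move: (Hu v); rewrite vu /= E eqxx.
Qed.

Definition tidx par v := find (fun r => root_of par r == root_of par v) (reps par).

Lemma has_rep par v : has (fun r => root_of par r == root_of par v) (reps par).
Proof.
set P := (fun r => root_of par r == root_of par v).
have hv : has P (enum 'I_n) by apply/hasP; exists v; rewrite ?mem_enum /P.
set m := nth v (enum 'I_n) (find P (enum 'I_n)).
have Pm : P m by exact: nth_find.
apply/hasP; exists m => //.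
rewrite /reps mem_filter mem_nth ?andbT; last by rewrite -has_find.
apply/forallP => u; apply/implyP => um.
have fn : find P (enum 'I_n) < n.
  by have := hv; rewrite has_find size_enum_ord.
have mv : (m : nat) = find P (enum 'I_n) by rewrite /m nth_enum_ord.
have hu : u = nth v (enum 'I_n) u by apply: ord_inj; rewrite nth_enum_ord.
have ui : ((u:nat) < find P (enum 'I_n))%N by rewrite -mv.
have := before_find v ui; rewrite -hu /P (eqP Pm) => ->; done.
Qed.

Lemma tidx_lt par v : tidx par v < size (reps par).
Proof. by rewrite /tidx -has_find has_rep. Qed.

Lemma tidx_nth par v x0 : root_of par (nth x0 (reps par) (tidx par v)) = root_of par v.
Proof. by apply/eqP; apply: (nth_find x0 (has_rep par v)). Qed.
End Reps.

Definition kstep n (w : {ffun 'I_n -> 'I_n * 'I_n * bool}) (x : 'I_n)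
  (z : 'I_n -> option 'I_n) :=
  if val x == 0 then z else kmerge z (w x).1.1 (w x).1.2 (w x).2.

Section Forest.
Variable n : nat.
Variable f : {ffun 'I_n -> 'I_n}.
Hypothesis fR : f \in rrt_space n.
Variable s : {perm 'I_n}.

Lemma f0 (m : 'I_n) : (m : nat) = 0 -> f m = m.
Proof.
move: fR; rewrite inE => /forallP /(_ m); rewrite -[val m]/(m : nat) => H m0.
by move: H; rewrite m0 eqxx => /eqP.
Qed.

Lemma flt (m : 'I_n) : (m : nat) != 0 -> f m < m.
Proof.
move: fR; rewrite inE => /forallP /(_ m); rewrite -[val m]/(m : nat) => H m0.
by move: H; rewrite (negbTE m0).
Qed.

Definition gstep k (x : 'I_n) := if (k < x)%N then f x else x.
Definition lr k x := iter n (gstep k) x.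
Definition G k (v : 'I_n) :=
  let j := (s^-1)%g v in if (k < j)%N then Some (s (f j)) else None.

Lemma lr_bound k m (x : 'I_n) : (iter m (gstep k) x <= k) || (iter m (gstep k) x + m <= x).
Proof.
elim: m => [|m IH]; first by rewrite addn0 leqnn orbT.
rewrite iterS /gstep; set y := iter m _ x.
case: ifP => ky; last by rewrite leqNgt ky.
move: IH; rewrite leqNgt ky /= => H; apply/orP; right.
have y0 : (y : nat) != 0 by rewrite -lt0n (leq_ltn_trans _ ky).
by rewrite addnS (leq_trans _ H) // ltn_add2r flt.
Qed.

Lemma lr_le k (x : 'I_n) : lr k x <= k.
Proof.
have := lr_bound k n x; rewrite /lr; case/orP => // H.
have := leq_trans H (ltnW (ltn_ord x)); set y := iter _ _ _.
by move=> H2; lia.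
Qed.

Lemma gstep_id k (x : 'I_n) : x <= k -> gstep k x = x.
Proof. by rewrite /gstep leqNgt => /negbTE ->. Qed.

Lemma lr_id k (x : 'I_n) : x <= k -> lr k x = x.
Proof. by move=> xk; rewrite /lr iter_fix // gstep_id. Qed.

Lemma lr_f k (x : 'I_n) : k < x -> lr k (f x) = lr k x.
Proof.
move=> kx; have gx : gstep k x = f x by rewrite /gstep kx.
by rewrite /lr -gx -iterSr iterS gstep_id //; exact: lr_le.
Qed.

Lemma root_G k v : root_of (G k) v = s (lr k ((s^-1)%g v)).
Proof.
rewrite /root_of /lr -{1}(permKV s v).
have H m : iter m (fun x => if G k x is Some y then y else x) (s (s^-1 v)%g) =
  s (iter m (gstep k) (s^-1 v)%g).
  by elim: m => //= m ->; rewrite /G permK /gstep; case: ifP.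
exact: H.
Qed.

Lemma G_None k v : (G k v == None) = ((s^-1)%g v <= k).
Proof. by rewrite /G /=; case: ltnP. Qed.

Lemma size_reps_G k : size (reps (G k)) <= k.+1.
Proof.
case Hr: (reps (G k)) => [|x0 rr]; first by []. rewrite -Hr.
rewrite -(size_map (root_of (G k))).
have -> : k.+1 = size [seq s (insubd x0 i) | i <- iota 0 k.+1]
  by rewrite size_map size_iota.
apply: uniq_leq_size.
  by rewrite map_inj_in_uniq ?reps_uniq //; exact: reps_inj.
move=> r /mapP[v _ ->]; rewrite root_G; apply/mapP.
exists (lr k (s^-1 v)%g : nat); first by rewrite mem_iota /= add0n ltnS lr_le.
by congr (s _); apply: val_inj; rewrite val_insubd ltn_ord.
Qed.

Definition tu (k : 'I_n) := tidx (G k) (s k).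
Definition tp (k : 'I_n) := tidx (G k) (s (f k)).
Definition psi : {ffun 'I_n -> 'I_n * 'I_n * bool} :=
  [ffun k : 'I_n => if (k : nat) == 0 then (k, k, false)
     else (insubd k (minn (tu k) (tp k)), insubd k (maxn (tu k) (tp k)), tp k < tu k)].

Lemma root_sk (k : 'I_n) : root_of (G k) (s k) = s k.
Proof. by rewrite root_G permK lr_id. Qed.

Lemma root_sfk (k : 'I_n) : (k : nat) != 0 -> root_of (G k) (s (f k)) = s (f k).
Proof. by move=> k0; rewrite root_G permK lr_id // ltnW // flt. Qed.

Lemma tidx_le k v : tidx (G k) v <= k.
Proof. by rewrite -ltnS (leq_trans (tidx_lt _ _)) // size_reps_G. Qed.

Lemma tu_tp_neq (k : 'I_n) : (k : nat) != 0 -> tu k != tp k.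
Proof.
move=> k0; apply/eqP => E.
have := tidx_nth (G k) (s k) k; rewrite -/(tu k) E /tp tidx_nth root_sk root_sfk //.
move/perm_inj => fk; move: (flt k0); rewrite fk ltnn //.
Qed.

Lemma G_step (k : 'I_n) : (k : nat) != 0 ->
  (fun v => if v == s k then Some (s (f k)) else G k v) = G k.-1.
Proof.
move=> k0; apply: functional_extensionality => v; rewrite /G /=.
case: eqP => [->|nv]; first by rewrite permK; case: ltnP => //; lia.
have : (s^-1 v)%g != k :> nat.
  by apply/eqP => /ord_inj E; apply: nv; rewrite -E permKV.
move: (s^-1 v)%g => j jk.
have -> : (k < j) = (k.-1 < j) by apply/idP/idP; lia.
by [].
Qed.

Lemma merge_step (k : 'I_n) : (k : nat) != 0 ->
  kmerge (G k) (psi k).1.1 (psi k).1.2 (psi k).2 = G k.-1.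
Proof.
move=> k0; rewrite ffunE (negbTE k0) /= -G_step //.
have hu : tu k <= k := tidx_le k (s k); have hp : tp k <= k := tidx_le k (s (f k)).
have kn := ltn_ord k.
have ne := tu_tp_neq k0.
rewrite /kmerge !val_insubd.
have tun : tu k < n by lia.
have tpn : tp k < n by lia.
case: ltnP => H.
- by rewrite tun tpn /tp /tu !tidx_nth root_sk root_sfk.
- by rewrite tun tpn /tp /tu !tidx_nth root_sk root_sfk.
Qed.

Lemma psi_in : psi \in king_space n.
Proof.
rewrite inE; apply/forallP => k; rewrite ffunE.
case: eqP => [_|/eqP k0] /=; first by rewrite !eqxx.
have hu : tu k <= k := tidx_le k (s k); have hp : tp k <= k := tidx_le k (s (f k)).
have kn := ltn_ord k.
have ne := tu_tp_neq k0.
rewrite !val_insubd.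
case: ifP => [_|]; last by move=> /negP []; lia.
case: ifP => [_|]; last by move=> /negP []; lia.
apply/andP; split; lia.
Qed.

Lemma fold_G i : i <= n ->
  foldr (kstep psi) (fun _ => None) (drop i (enum 'I_n)) = G i.-1.
Proof.
set g := kstep psi.
have H d : forall j, j + d = n ->
    foldr g (fun _ => None) (drop j (enum 'I_n)) = G j.-1.
  elim: d => [|d IH] j jd.
    rewrite addn0 in jd; rewrite drop_oversize ?size_enum_ord ?jd //=.
    apply: functional_extensionality => v; rewrite /G /=.
    by case: ltnP => // H; have := ltn_ord (s^-1 v)%g; lia.
  have jn : j < n by lia.
  rewrite (drop_nth (Ordinal jn)) ?size_enum_ord // /= IH; last by lia.
  set x := nth _ _ _.
  have xv : (x : nat) = j by rewrite /x nth_enum_ord.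
  rewrite /g /kstep -xv; case: eqP => [->|/eqP x0] //.
  by rewrite merge_step.
by move=> jn; apply: (H (n - i)); lia.
Qed.

Lemma kingman_psi : kingman psi = G 0.
Proof. by rewrite /kingman foldl_rev; have := fold_G (leq0n n); rewrite drop0. Qed.

Lemma G_s k (x : 'I_n) : G k (s x) = if (k < x)%N then Some (s (f x)) else None.
Proof. by rewrite /G /= permK. Qed.
End Forest.

Lemma psi_inj n (f f' : {ffun 'I_n -> 'I_n}) (s s' : {perm 'I_n}) :
  f \in rrt_space n -> f' \in rrt_space n -> psi f s = psi f' s' -> f = f' /\ s = s'.
Proof.
move=> fR fR' E.
have HG k : k < n -> G f s k = G f' s' k.
  move=> kn; rewrite -[k]/(k.+1.-1) -(fold_G fR) // -(fold_G fR' s') //.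
  by rewrite E.
have Hs (k : 'I_n) : (k : nat) != 0 -> s k = s' k.
  move=> k0.
  have h1 : G f' s' k (s k) == None by rewrite -HG // G_None permK.
  have h2 : G f' s' k.-1 (s k) != None.
    rewrite -HG ?G_None ?permK; [by case: k k0 h1 => [[|kk]] //= *; rewrite ltnn | exact: leq_ltn_trans (leq_pred k) (ltn_ord k)].
  move: h1 h2; rewrite !G_None => h1 h2.
  have : (s'^-1 (s k))%g = k by apply: ord_inj; lia.
  by move=> E2; rewrite -{2}E2 permKV.
have ss : s = s'.
  apply/permP => x; case: (eqVneq (x : nat) 0) => [x0|]; last exact: Hs.
  have [y sy] : exists y, s' y = s x by exists (s'^-1 (s x))%g; rewrite permKV.
  case: (eqVneq (y : nat) 0) => [y0|y0].
    have xy : x = y by apply: ord_inj; rewrite x0 y0.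
    by rewrite -sy xy.
  move: sy; rewrite -Hs // => /perm_inj yx.
  by move: y0; rewrite yx x0.
split => //; apply/ffunP => x.
case: (eqVneq (x : nat) 0) => [x0|x0]; first by rewrite !f0.
have := HG 0 (leq_ltn_trans (leq0n _) (ltn_ord x)).
move/(congr1 (fun g => g (s x))); rewrite G_s {2}ss G_s lt0n x0 => [[]].
by rewrite -ss => /perm_inj.
Qed.

Lemma foldr_prod (T : Type) (g : T -> nat) (s : seq T) :
  foldr muln 1 (map g s) = \prod_(x <- s) g x.
Proof. by elim: s => [|x s IH]; rewrite ?big_nil ?big_cons //= IH. Qed.

Lemma sum_ord_nat n (F : nat -> nat) : \sum_(a < n) F a = \sum_(0 <= a < n) F a.
Proof. by rewrite big_mkord. Qed.

Lemma sum_lt n m : m <= n -> \sum_(a < n) (a < m : nat) = m.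
Proof.
move=> mn; rewrite (sum_ord_nat n (fun a => (a < m : nat))) (@big_cat_nat _ _ _ m 0 n _ _ (leq0n m) mn) /=.
rewrite (@eq_big_nat _ _ _ 0 m _ (fun _ => 1)); last by move=> i /andP[_ ->].
rewrite (@eq_big_nat _ _ _ m n _ (fun _ => 0)); last first.
  by move=> i /andP[mi _]; rewrite ltnNge mi.
by rewrite !sum_nat_const_nat; lia.
Qed.

Lemma card_lt n m : m <= n -> #|[pred x : 'I_n | x < m]| = m.
Proof.
move=> mn; rewrite -sum1_card big_mkcond /= -{2}(sum_lt mn).
by apply: eq_bigr => i _; rewrite inE; case: (i < m).
Qed.

Lemma sum_double k : \sum_(0 <= b < k.+1) b * 2 = k * k.+1.
Proof.
elim: k => [|k IH]; first by rewrite big_nat1.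
by rewrite big_nat_recr //= IH; lia.
Qed.

Lemma card_Fk n (k : 'I_n) :
  #|[pred t : 'I_n * 'I_n * bool | (t.1.1 < t.1.2) && (t.1.2 <= k)]| = k * k.+1.
Proof.
rewrite -sum1_card big_mkcond /=.
rewrite (eq_bigr (fun t : 'I_n * 'I_n * bool => ((t.1.1 < t.1.2) && (t.1.2 <= k) : nat))); last first.
  by move=> t _; rewrite inE; case: (_ && _).
rewrite -(pair_bigA _ (fun (p : 'I_n * 'I_n) (xi : bool) => ((p.1 < p.2) && (p.2 <= k) : nat))) /=.
rewrite (eq_bigr (fun p : 'I_n * 'I_n => ((p.1 < p.2) && (p.2 <= k) : nat) * 2)); last first.
  by move=> p _; rewrite big_bool /=; lia.
rewrite -(pair_bigA _ (fun a b : 'I_n => ((a < b) && (b <= k) : nat) * 2)) /=.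
rewrite exchange_big /=.
rewrite (eq_bigr (fun b : 'I_n => (b <= k : nat) * b * 2)); last first.
  move=> b _; rewrite -big_distrl /=; congr (_ * 2).
  case bk: (b <= k) => /=.
    rewrite mul1n -{2}(sum_lt (ltnW (ltn_ord b))); apply: eq_bigr => a _.
    by rewrite andbT.
  by rewrite mul0n big1 // => a _; rewrite andbF.
rewrite (sum_ord_nat n (fun b => (b <= k : nat) * b * 2)).
have kn : k.+1 <= n := ltn_ord k.
rewrite (@big_cat_nat _ _ _ k.+1 0 n _ _ (leq0n k.+1) kn) /=.
rewrite (@eq_big_nat _ _ _ 0 k.+1 _ (fun b => b * 2)); last first.
  by move=> i /andP[_ ik]; rewrite ltnS in ik; rewrite ik mul1n.
rewrite (@eq_big_nat _ _ _ k.+1 n _ (fun _ => 0)); last first.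
  by move=> i /andP[ki _]; rewrite leqNgt ki.
by rewrite sum_double sum_nat_const_nat muln0 addn0.
Qed.

Lemma prod_fact n : \prod_(k < n) k.+1 = n`!.
Proof.
elim: n => [|n IH]; first by rewrite big_ord0.
by rewrite big_ord_recr /= IH factS mulnC.
Qed.

Lemma card_R n : #|rrt_space n| = \prod_(k < n) (if (k : nat) == 0 then 1 else k).
Proof.
rewrite (eq_card (B := family (fun k : 'I_n =>
   [pred x : 'I_n | if val k == 0 then x == k else (x < k)%N]))); last first.
  by move=> g; rewrite inE; apply/forallP/familyP => H k; exact: H.
rewrite card_family foldr_prod big_enum /=; apply: eq_bigr => k _.
case: eqP => [k0|/eqP k0].
  by rewrite -(card1 k); apply: eq_card => x; rewrite !inE /=.
exact: card_lt (ltnW (ltn_ord k)).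
Qed.

Lemma card_K n : #|king_space n| = \prod_(k < n) (if (k : nat) == 0 then 1 else k * k.+1).
Proof.
rewrite (eq_card (B := family (fun k : 'I_n =>
   [pred t : 'I_n * 'I_n * bool | if val k == 0 then
      [&& t.1.1 == k, t.1.2 == k & ~~ t.2] else (t.1.1 < t.1.2) && (t.1.2 <= k)]))); last first.
  by move=> g; rewrite inE; apply/forallP/familyP => H k; exact: H.
rewrite card_family foldr_prod big_enum /=; apply: eq_bigr => k _.
case: eqP => [k0|/eqP k0].
  rewrite -(card1 (k, k, false)); apply: eq_card => [[[a b] xi]].
  rewrite !inE /= xpair_eqE.
  by case: xi; rewrite /in_mem /= ?andbT ?andbF.
by rewrite -(card_Fk k); apply: eq_card => x.
Qed.

Lemma card_K_R n : #|king_space n| = #|rrt_space n| * n`!.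
Proof.
rewrite card_K card_R -prod_fact -big_split /=; apply: eq_bigr => k _.
by case: eqP => [->|].
Qed.

Import GRing.Theory Num.Theory.

Lemma card_bij_pred (T U : finType) (A : {set T}) (B : {set U}) (g : T -> U) (P : pred U) :
  {in A &, injective g} -> g @: A = B ->
  #|[set x in B | P x]| = #|[set x in A | P (g x)]|.
Proof.
move=> ginj gAB.
have -> : [set x in B | P x] = g @: [set x in A | P (g x)].
  apply/setP => y; rewrite !inE -gAB; apply/andP/imsetP.
    by case=> /imsetP[x xA ->] Px; exists x; rewrite // inE xA.
  by case=> x; rewrite inE => /andP[xA Px] ->; split=> //; apply: imset_f.
rewrite card_in_imset // => x y; rewrite !inE => /andP[xA _] /andP[yA _].
exact: ginj.
Qed.

Lemma kingman_relab n (f : {ffun 'I_n -> 'I_n}) (t : {perm 'I_n}) :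
  f \in rrt_space n -> kingman (psi f (t^-1)%g) = relab (t^-1)%g (rrt_par f).
Proof.
move=> fR; rewrite kingman_psi //; apply: functional_extensionality => v.
rewrite /G /relab /rrt_par /=.
by rewrite lt0n; case: eqP.
Qed.

Lemma inset_pred (T : finType) (A : {set T}) (P : pred T) x :
  (x \in [set y in A | P y]) = (x \in A) && P x.
Proof. by rewrite inE. Qed.

Theorem corollary2p3 (n : nat) :
  (forall x : {ffun 'I_n -> nat * nat},
     prob (king_space n) (fun w => profile (kingman w) == x) =
     prob (setX (rrt_space n) [set: {perm 'I_n}])
          (fun p => [ffun i => profile (rrt_par p.1) (p.2 i)] == x))
  /\
  (forall (s : seq (int * nat)) (c : seq nat),
     prob (rrt_space n) (fun f => [seq count_dh (rrt_par f) q.1 q.2 | q <- s] == c) =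
     prob (king_space n) (fun w => [seq count_dh (kingman w) q.1 q.2 | q <- s] == c)).
Proof.
set A := setX (rrt_space n) [set: {perm 'I_n}].
pose Psi (p : {ffun 'I_n -> 'I_n} * {perm 'I_n}) := psi p.1 (p.2^-1)%g.
have PsiA : forall p, p \in A -> Psi p \in king_space n.
  by move=> [f t] /setXP[fR _]; apply: psi_in.
have Psiinj : {in A &, injective Psi}.
  move=> [f t] [f' t'] /setXP[fR _] /setXP[fR' _] /(psi_inj fR fR') [-> E].
  by move: E => /= /invg_inj ->.
have cardA : #|A| = #|king_space n| by rewrite cardsX cardsT card_Sn card_K_R.
have PsiAK : Psi @: A = king_space n.
  apply/eqP; rewrite eqEcard; apply/andP; split.
    by apply/subsetP => w /imsetP[p pA ->]; exact: PsiA.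
  by rewrite card_in_imset // cardA.
have kr : forall p, p \in A -> kingman (Psi p) = relab (p.2^-1)%g (rrt_par p.1).
  by move=> [f t] /setXP[fR _]; apply: kingman_relab.
split.
- move=> x; rewrite /prob cardA (card_bij_pred _ Psiinj PsiAK); congr (_%:R / _)%R.
  apply: eq_card => p; rewrite !inset_pred; case pA: (p \in A) => //=.
  rewrite kr //; suff -> : profile (relab (p.2^-1)%g (rrt_par p.1)) = [ffun i => profile (rrt_par p.1) (p.2 i)] by []; apply/ffunP => i.
  by rewrite relab_profile !ffunE invgK.
- move=> s c; rewrite /prob (card_bij_pred _ Psiinj PsiAK) -cardA.
  have -> : [set p in A | [seq count_dh (kingman (Psi p)) q.1 q.2 | q <- s] == c]
      = setX [set f in rrt_space n | [seq count_dh (rrt_par f) q.1 q.2 | q <- s] == c]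
             [set: {perm 'I_n}].
    apply/setP => [[f t]].
    have Aft : ((f, t) \in A) = (f \in rrt_space n) by rewrite /A in_setX in_setT andbT.
    rewrite inset_pred Aft [in RHS]in_setX in_setT andbT inset_pred; case fR: (f \in rrt_space n) => //=.
    rewrite kr ?Aft //=.
    suff -> : [seq count_dh (relab t^-1 (rrt_par f)) q.1 q.2 | q <- s] =
       [seq count_dh (rrt_par f) q.1 q.2 | q <- s] by [].
    by apply: eq_map => q; rewrite relab_count.
  rewrite /A !cardsX cardsT card_Sn !natrM invfM mulrACA mulfV ?mulr1 //.
  by rewrite pnatr_eq0 -lt0n fact_gt0.
Qed.
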